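(* Let $\{\nu_n\}_{n\in\mathbb N}$ be probability measures on $\mathbb R^d$ with densities $\{p_n\}$. Suppose there are constants $\delta>0$, $c>0$, $N_0\in\mathbb N$ such that for all $n>N_0$: (1) $p_n$ has a unique maximizer $\hat\theta_n$; (2) $\nu_n(B_1(\hat\theta_n))>1/2$; (3) $p_n$ is positive and differentiable on $B_\delta(\hat\theta_n)$ and $$\sup_{\|\theta-\hat\theta_n\|\le\delta}\ \sup_{\|v\|=1}\frac{|\nabla_v p_n(\theta)|}{p_n(\theta)}\le n^c.$$ Let $\lambda_n$ be the density of the uniform distribution on $B_{n^{-c}}(\hat\theta_n)$. Then there is an absolute constant $C$ (not depending on $n,c,d$; one may take $C=2e$) such that for all $n>\max(N_0,\delta^{-1/c})$ and all $\theta\in B_{n^{-c}}(\hat\theta_n)$, $$\frac{\lambda_n(\theta)}{p_n(\theta)}\le C\,n^{cd}.$$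
   Context: $B_r(x)=\{y:\|x-y\|\le r\}$ is the closed Euclidean ball of radius $r$ about $x$; $\nabla_v$ denotes the directional derivative in direction $v$. *)

(* Defs.v *)
From HB Require Import structures.
From mathcomp Require Import all_boot all_order all_algebra.
From mathcomp Require Import all_classical all_reals all_analysis.
Set Implicit Arguments. Unset Strict Implicit. Unset Printing Implicit Defensive.
Import Order.TTheory GRing.Theory Num.Theory.
Import numFieldNormedType.Exports.
Local Open Scope classical_set_scope.
Local Open Scope ring_scope.

Section Defs.
Context {R : realType}.

Definition enorm (d : nat) (x : 'rV[R]_d) : R :=
  Num.sqrt (\sum_(i < d) x ord0 i ^+ 2).

Definition eball (d : nat) (x : 'rV[R]_d) (r : R) : set 'rV[R]_d :=
  [set y | enorm (x - y) <= r].

(* identification of d-tuples (carrying the product Borel sigma-algebra)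
   with row vectors *)
Definition torow {d : nat} (t : d.-tuple R) : 'rV[R]_d := \row_(i < d) tnth t i.

(* d-dimensional Lebesgue measure on d.-tuple R, built as the iterated
   product of the one-dimensional Lebesgue measure:
   leb_0 = Dirac mass at the empty tuple,
   leb_(n+1)(A) = (lebesgue_measure \x leb_n) {(a, t) | a :: t \in A}. *)
Fixpoint lebRd (n : nat) : set (n.-tuple R) -> \bar R :=
  match n return set (n.-tuple R) -> \bar R with
  | 0 => fun A => \d_([tuple]) A
  | n'.+1 => fun A =>
      ((@lebesgue_measure R) \x (lebRd (n:=n')))%E
        [set p : R * n'.-tuple R | A [tuple of p.1 :: p.2]]
  end.

Definition lebV (d : nat) (A : set 'rV[R]_d) : \bar R :=
  lebRd (n:=d) (torow @^-1` A).

Definition dens_measure (d : nat) (p : 'rV[R]_d -> R) (A : set 'rV[R]_d) : \bar R :=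
  (\int[lebRd (n:=d)]_(x in torow @^-1` A) (p (torow x))%:E)%E.

Definition is_prob_density (d : nat) (p : 'rV[R]_d -> R) : Prop :=
  measurable_fun setT (fun x : d.-tuple R => p (torow x)) /\
  (forall x, 0 <= p x) /\
  dens_measure p setT = 1%E.

Definition unif_density (d : nat) (x0 : 'rV[R]_d) (r : R) (y : 'rV[R]_d) : R :=
  \1_(eball x0 r) y / fine (lebV (eball x0 r)).

End Defs.

(* Main.v *)
Require Import Defs.
From HB Require Import structures.
From mathcomp Require Import all_boot all_order all_algebra.
From mathcomp Require Import all_classical all_reals all_analysis measurable_realfun.
Import Order.TTheory GRing.Theory Num.Theory.
Import numFieldNormedType.Exports.
Local Open Scope classical_set_scope.
Local Open Scope ring_scope.

Section oned.
Context {R : realType}.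
Local Notation leb := (@lebesgue_measure R).

Lemma affine_preimage_itv (a e u v : R) : 0 < a ->
  (fun x : R => a * x + e) @^-1` `]u, v]%classic = `](u - e) / a, (v - e) / a]%classic.
Proof.
move=> a0; apply/seteqP; split => x /=; rewrite !in_itv /= => /andP[h1 h2];
  apply/andP; split.
- by rewrite ltr_pdivrMr // mulrC ltrBlDr.
- by rewrite ler_pdivlMr // mulrC lerBrDr.
- by rewrite -ltrBlDr mulrC -ltr_pdivrMr.
- by rewrite -lerBrDr mulrC -ler_pdivlMr.
Qed.

Lemma measurable_affine (a e : R) : measurable_fun setT (fun x : R => a * x + e).
Proof. by apply: measurable_funD => //; apply: measurable_funM. Qed.

Section paff.
Variables (a e : R).
Definition paff (A : set (measurableTypeR R)) : \bar R := leb ((fun x : R => a * x + e) @^-1` A).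

Let paff0 : paff set0 = 0%E.
Proof. by rewrite /paff preimage_set0 measure0. Qed.

Let paff_ge0 A : (0 <= paff A)%E.
Proof. exact: measure_ge0. Qed.

Let paff_sigma_additive : semi_sigma_additive paff.
Proof.
move=> F mF tF mUF; rewrite /paff preimage_bigcup.
have mf : measurable_fun (setT : set (measurableTypeR R)) (fun x : measurableTypeR R => (a * x + e : measurableTypeR R)) := measurable_affine a e.
apply: measure_semi_sigma_additive.
- by move=> n; rewrite -[X in measurable X]setTI; exact: mf.
- apply/trivIsetP => /= i j _ _ ij; rewrite -preimage_setI.
  by move/trivIsetP : tF => /(_ _ _ _ _ ij) ->//; rewrite preimage_set0.
- by rewrite -preimage_bigcup -[X in measurable X]setTI; exact: mf.
Qed.

HB.instance Definition _ := isMeasure.Build _ _ _ paff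
  paff0 paff_ge0 paff_sigma_additive.
End paff.

Lemma leb_affine (a e : R) (A : set R) : 0 < a -> measurable A ->
  leb ((fun x => a * x + e) @^-1` A) = ((a^-1)%:E * leb A)%E.
Proof.
move=> a0 mA.
have ha : 0 <= a by exact: ltW.
have h : forall X, ocitv X -> leb X = mscale (NngNum ha) (paff a e) X.
  move=> X; case/ocitvP => [->|[[u v]] /= uv ->].
    by rewrite !measure0.
  rewrite /mscale /=; unfold paff; rewrite affine_preimage_itv // !lebesgue_measure_itv /= !lte_fin.
  have -> : (u - e) / a < (v - e) / a by rewrite ltr_pM2r ?invr_gt0 // ltrBlDr subrK.
  rewrite uv -!EFinB -EFinM; congr (_%:E).
  by rewrite -mulrBl opprD addrACA subrr addr0 mulrCA divff ?mulr1 // gt_eqF.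
have := lebesgue_measure_unique h mA.
rewrite /mscale /=; unfold paff => ->.
rewrite muleA -EFinM mulVf ?mul1e //.
by rewrite gt_eqF.
Qed.

Lemma int_affine (a e : R) (G : measurableTypeR R -> \bar R) : 0 < a ->
  measurable_fun setT G -> (forall x, (0 <= G x)%E) ->
  (\int[leb]_x G (a * x + e)%R = (a^-1)%:E * \int[leb]_x G x)%E.
Proof.
move=> a0 mG G0.
have mf : measurable_fun (setT : set (measurableTypeR R)) (fun x : measurableTypeR R => (a * x + e : measurableTypeR R)) := measurable_affine a e.
have := @ge0_integral_pushforward _ _ _ _ R _ mf leb setT G measurableT mG (fun y _ => G0 y).
rewrite preimage_setT => <-.
have ha : 0 <= a^-1 by rewrite invr_ge0 ltW.
transitivity (\int[mscale (NngNum ha) leb]_x G x)%E; last first.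
  by rewrite ge0_integral_mscale.
apply: eq_measure_integral => B mB _.
by rewrite /mscale /= /pushforward leb_affine.
Qed.
End oned.
Section consm.
Context {R : realType}.
Local Notation leb := (@lebesgue_measure R).
Variables (n : nat) (m : {sigma_finite_measure set (n.-tuple R) -> \bar R}).

Definition consf (p : measurableTypeR R * n.-tuple R) : n.+1.-tuple R :=
  [tuple of p.1 :: p.2].
Definition splitf (t : n.+1.-tuple R) : measurableTypeR R * n.-tuple R :=
  (thead t, [tuple of behead t]).

Lemma measurable_consf : measurable_fun setT consf.
Proof.
by apply: (@measurable_cons _ _ _ R fst n snd).
Qed.

Lemma measurable_splitf : measurable_fun setT splitf.
Proof.
apply: measurable_fun_pair; last exact: measurable_behead.
exact: (@measurable_tnth _ R n.+1 ord0).
Qed.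

Lemma splitfK : cancel consf splitf.
Proof. by case=> a t; rewrite /splitf /consf /=; congr pair; apply: val_inj. Qed.

Definition consm (A : set (n.+1.-tuple R)) : \bar R := (leb \x m)%E (consf @^-1` A).

Let consm0 : consm set0 = 0%E.
Proof. by rewrite /consm preimage_set0 measure0. Qed.

Let consm_ge0 A : (0 <= consm A)%E.
Proof. exact: measure_ge0. Qed.

Let consm_sigma_additive : semi_sigma_additive consm.
Proof.
move=> F mF tF mUF; rewrite /consm preimage_bigcup.
have mf := measurable_consf.
apply: measure_semi_sigma_additive.
- by move=> k; rewrite -[X in measurable X]setTI; exact: mf.
- apply/trivIsetP => /= i j _ _ ij; rewrite -preimage_setI.
  by move/trivIsetP : tF => /(_ _ _ _ _ ij) ->//; rewrite preimage_set0.
- by rewrite -preimage_bigcup -[X in measurable X]setTI; exact: mf.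
Qed.

HB.instance Definition _ := isMeasure.Build _ _ _ consm
  consm0 consm_ge0 consm_sigma_additive.

Let consm_sigma_finite : sigma_finite setT consm.
Proof.
have [F FT Fm] : sigma_finite setT (leb \x m)%E.
  have /sigma_finiteP[F [TF ndF Foo]] := sigma_finiteT leb.
  have /sigma_finiteP[G [TG ndG Goo]] := sigma_finiteT m.
  exists (fun n => F n `*` G n).
   rewrite -setXTT TF TG predeqE => -[x y]; split.
      move=> [/= [n0 _ Fnx] [k _ Gky]]; exists (maxn n0 k) => //; split.
      - by move: x Fnx; exact/subsetPset/ndF/leq_maxl.
      - by move: y Gky; exact/subsetPset/ndG/leq_maxr.
    by move=> [n0 _ []/= ? ?]; split; exists n0.
  move=> k; have [? ?] := Foo k; have [? ?] := Goo k.
  split; first exact: measurableX.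
  by rewrite product_measure1E// lte_mul_pinfty// ge0_fin_numE.
exists (fun k => splitf @^-1` F k).
  by rewrite -preimage_bigcup -FT preimage_setT.
move=> k; split.
  by rewrite -[X in measurable X]setTI; apply: measurable_splitf => //; case: (Fm k).
rewrite /consm (_ : consf @^-1` (splitf @^-1` F k) = F k); first by case: (Fm k).
by apply/seteqP; split => p /=; rewrite splitfK.
Qed.

HB.instance Definition _ := @Measure_isSigmaFinite.Build _ _ _ consm consm_sigma_finite.
End consm.

Section lebm.
Context {R : realType}.
Lemma lebRd_measure (n : nat) :
  {m : {sigma_finite_measure set (n.-tuple R) -> \bar R} | lebRd (n:=n) = m}.
Proof.
elim: n => [|n [m IH]].
  by exists (\d_([tuple] : 0.-tuple R))%R.
exists (@consm R n m); apply/funext => A /=.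
by rewrite IH.
Qed.
End lebm.

Section scaling.
Context {R : realType}.
Local Notation leb := (@lebesgue_measure R).

Definition aff {n : nat} (a : R) (e : n.-tuple R) (t : n.-tuple R) : n.-tuple R :=
  [tuple a * tnth t i + tnth e i | i < n].

Lemma aff_cons n (a x : R) (e : n.+1.-tuple R) (t : n.-tuple R) :
  aff a e [tuple of x :: t] = [tuple of (a * x + thead e) :: aff a [tuple of behead e] t].
Proof.
apply: eq_from_tnth => i; rewrite tnth_mktuple.
case: (unliftP ord0 i) => [j ->|->].
  rewrite [in RHS](tnthS (a * x + thead e)) tnth_mktuple (tnthS x); congr (_ + _).
  by rewrite !(tnth_nth (0:R)) /= nth_behead.
by rewrite /thead !(tnth_nth (0:R)) /=.
Qed.

Lemma lebRd_aff (n : nat) (a : R) (e : n.-tuple R) (A : set (n.-tuple R)) :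
  0 < a -> measurable A ->
  lebRd (n:=n) (aff a e @^-1` A) = (((a^-1) ^+ n)%:E * lebRd (n:=n) A)%E.
Proof.
move=> a0; elim: n e A => [|n IH] e A mA.
  rewrite expr0 mul1e (_ : aff a e @^-1` A = A) //.
  by apply/seteqP; split => t /=; rewrite (tuple0 (aff a e t)) (tuple0 t).
have [m mE] := lebRd_measure (R:=R) n.
rewrite /= mE.
rewrite /product_measure1 /=.
rewrite mE in IH.
have mcA : measurable (@consf R n @^-1` A).
  by rewrite -[X in measurable X]setTI; apply: measurable_consf.
set G := fun u : measurableTypeR R => m (xsection (@consf R n @^-1` A) u).
have mG : measurable_fun setT G by exact: measurable_fun_xsection.
have G0 : forall u, (0 <= G u)%E by move=> u; exact: measure_ge0.
transitivity (\int[leb]_x ((a^-1 ^+ n)%:E * G (a * x + thead e)%R))%E.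
  apply: eq_integral => x _.
  rewrite /G -(IH [tuple of behead e]); last first.
    exact: measurable_xsection.
  congr (m _); apply/seteqP; split => t /=; rewrite /xsection /= !inE /=;
    by rewrite aff_cons.
rewrite ge0_integralZl_EFin //; first last.
- by rewrite exprn_ge0 // invr_ge0 ltW.
- by apply: measurableT_comp => //; exact: measurable_affine.
rewrite int_affine // muleA -EFinM exprSr.
done.
Qed.
End scaling.
Section enorm.
Context {R : realType}.

Lemma enorm_ge0 d (v : 'rV[R]_d) : 0 <= enorm v.
Proof. exact: sqrtr_ge0. Qed.

Lemma enormZ d (k : R) (v : 'rV[R]_d) : enorm (k *: v) = `|k| * enorm v.
Proof.
rewrite /enorm (eq_bigr (fun i => k ^+ 2 * v ord0 i ^+ 2)); last first.
  by move=> i _; rewrite mxE exprMn.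
by rewrite -mulr_sumr sqrtrM ?sqr_ge0 // sqrtr_sqr.
Qed.

Lemma enormN d (v : 'rV[R]_d) : enorm (- v) = enorm v.
Proof. by rewrite -scaleN1r enormZ normrN normr1 mul1r. Qed.

Lemma enorm_eq0 d (v : 'rV[R]_d) : enorm v = 0 -> v = 0.
Proof.
rewrite /enorm => /eqP; rewrite sqrtr_eq0 => h.
have h0 : \sum_(i < d) v ord0 i ^+ 2 = 0.
  by apply/eqP; rewrite eq_le h /=; apply: sumr_ge0 => i _; exact: sqr_ge0.
move/eqP: h0; rewrite psumr_eq0 => [/allP hall|i _]; last exact: sqr_ge0.
apply/rowP => i; rewrite mxE; apply/eqP; rewrite -sqrf_eq0.
by apply: hall; rewrite mem_index_enum.
Qed.
End enorm.

Section growth.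
Context {R : realType}.

Lemma line_is_derive (V : normedModType R) (f : V -> R) (x w : V) (t : R) :
  derivable f (t *: w + x) w ->
  is_derive t 1 (fun s => f (s *: w + x)) ('D_w f (t *: w + x)).
Proof.
have E : (fun s : R => s^-1 *: (((fun s => f (s *: w + x)) \o shift t) (s *: 1) - f (t *: w + x))) =
  (fun s => s^-1 *: ((f \o shift (t *: w + x)) (s *: w) - f (t *: w + x))).
  apply/funext => s /=; congr (_ *: (f _ - _)).
  by rewrite [s *: 1]mulr1 scalerDl addrA.
move=> dw; apply: DeriveDef.
  by rewrite /derivable E.
by rewrite /derive E.
Qed.

Lemma exp_growth (h dh : R -> R) :
  (forall t : R, 0 <= t <= 1 -> is_derive t 1 h (dh t)) ->
  (forall t : R, 0 <= t <= 1 -> - h t <= dh t) ->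
  h 0 <= h 1 * expR 1.
Proof.
move=> hd hb.
have kd : forall t : R, 0 <= t <= 1 ->
    is_derive t 1 (h * expR) (h t *: expR t + expR t *: dh t).
  move=> t t01; have := hd t t01 => ?.
  exact: is_deriveM.
have [c c01 E] : exists2 c, c \in `[0, 1]%R & (h * expR) 1 - (h * expR) 0 = (fun t => h t *: expR t + expR t *: dh t) c * (1 - 0).
  apply: MVT_segment; first exact: ler01.
    move=> t; rewrite in_itv /= => /andP[a b]; apply: kd.
    by rewrite !ltW.
  apply: derivable_within_continuous => t; rewrite in_itv /= => t01.
  by have [] := kd t t01.
move: E; rewrite /= !subr0 mulr1 => E.
have {E} : h 1 * expR 1 - h 0 * expR 0 = h c * expR c + expR c * dh c := E.
rewrite expR0 mulr1 => /eqP; rewrite subr_eq => /eqP ->.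
rewrite lerDr.
move: c01; rewrite in_itv /= => c01.
rewrite [expR c * _]mulrC -mulrDl mulr_ge0 ?expR_ge0 //.
by rewrite -lerBlDl sub0r; exact: hb.
Qed.


Lemma density_lower d (P : 'rV[R]_d -> R) (th0 th : 'rV[R]_d) (r K : R) :
  0 < r -> r * K <= 1 -> enorm (th0 - th) <= r ->
  (forall y, enorm (th0 - y) <= r -> 0 < P y /\ differentiable P y /\
     forall v : 'rV[R]_d, enorm v = 1 -> `|'D_v P y| / P y <= K) ->
  P th0 <= P th * expR 1.
Proof.
move=> r0 rK thr hyp.
set w := th - th0.
have yin : forall s : R, 0 <= s <= 1 -> enorm (th0 - (s *: w + th0)) <= r.
  move=> s /andP[s0 s1].
  rewrite opprD addrCA subrr addr0 enormN enormZ ger0_norm //.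
  apply: le_trans thr; rewrite -enormN opprB -/w.
  by rewrite ler_piMl ?enorm_ge0.
have e1 : 1 <= expR 1 :> R by apply: le_trans (expR_ge1Dx 1); rewrite lerDl.
have [w0|wn0] := eqVneq (enorm w) 0.
  have : th = th0 by apply/eqP; rewrite -subr_eq0; apply/eqP/enorm_eq0.
  move=> ->; rewrite ler_peMr //.
  have := hyp th0; rewrite subrr (_ : enorm (0 : 'rV[R]_d) = 0).
    by case=> //; [exact: ltW | move=> /ltW].
  by rewrite -(scale0r (0 : 'rV[R]_d)) enormZ normr0 mul0r.
have wpos : 0 < enorm w by rewrite lt_neqAle eq_sym wn0 enorm_ge0.
have -> : th = 1 *: w + th0 by rewrite scale1r /w subrK.
have -> : P th0 = P (0 *: w + th0) by rewrite scale0r add0r.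
apply: (@exp_growth (fun s => P (s *: w + th0)) (fun s => 'D_w P (s *: w + th0))).
  move=> t t01; apply: line_is_derive; apply: diff_derivable.
  by have [_ []] := hyp _ (yin t t01).
move=> t t01; have [Py [dP bnd]] := hyp _ (yin t t01).
set y := t *: w + th0 in Py dP bnd *.
set v := (enorm w)^-1 *: w.
have nv : enorm v = 1 by rewrite enormZ ger0_norm ?invr_ge0 ?enorm_ge0 // mulVf.
have Dw : 'D_w P y = enorm w * 'D_v P y.
  rewrite !deriveE // /v linearZ /=.
  by rewrite /GRing.scale /= mulrA mulfV ?mul1r.
have := bnd v nv; rewrite ler_pdivrMr // => hv.
rewrite Dw lerNl -mulrN; apply: le_trans (ler_norm _) _.
rewrite normrM normrN ger0_norm ?enorm_ge0 //.
have K0 : 0 <= K.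
  have := le_trans (normr_ge0 _) hv; by rewrite pmulr_lge0.
have wr : enorm w <= r.
  have := yin 1; rewrite ler01 lexx scale1r opprD addrCA subrr addr0 enormN.
  by apply.
have h2 : enorm w * `|'D_v P y| <= enorm w * (K * P y).
  by rewrite ler_wpM2l // enorm_ge0.
apply: le_trans h2 _.
rewrite mulrA -[leRHS]mul1r; apply: ler_wpM2r; first exact: ltW.
by apply: le_trans _ rK; rewrite ler_wpM2r.
Qed.
End growth.

Section balls.
Context {R : realType}.

Definition sqsum {d} (x : 'rV[R]_d) (t : d.-tuple R) : R :=
  \sum_(i < d) (x ord0 i - tnth t i) ^+ 2.

Lemma ball1E d (x : 'rV[R]_d) :
  torow @^-1` eball x 1 = [set t | sqsum x t <= 1].
Proof.
have E : forall t : d.-tuple R, \sum_(i < d) (x - torow t) ord0 i ^+ 2 = sqsum x t.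
  by move=> t; apply: eq_bigr => i _; rewrite !mxE.
apply/seteqP; split => t /=; rewrite /eball /enorm /= E.
  by rewrite -{1}sqrtr1 ler_sqrt.
by move=> h; rewrite -sqrtr1 ler_sqrt.
Qed.

Lemma measurable_ball1 d (x : 'rV[R]_d) : measurable (torow @^-1` eball x 1).
Proof.
rewrite ball1E.
have mg : measurable_fun setT (sqsum x).
  apply: measurable_sum => i.
  apply: measurable_funX; apply: measurable_funB => //.
  exact: measurable_tnth.
have := mg measurableT _ (@measurable_itv R `]-oo, 1]).
rewrite setTI; congr measurable; apply/seteqP; split => t /=;
  by rewrite in_itv /=.
Qed.

Lemma ballr_aff d (x : 'rV[R]_d) (r : R) : 0 < r ->
  torow @^-1` eball x r =
  aff (r^-1) [tuple x ord0 i - r^-1 * x ord0 i | i < d] @^-1` (torow @^-1` eball x 1).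
Proof.
move=> r0.
have E : forall t, x - torow (aff r^-1 [tuple x ord0 i - r^-1 * x ord0 i | i < d] t)
    = r^-1 *: (x - torow t).
  move=> t; apply/rowP => i; rewrite !mxE !tnth_mktuple.
  by rewrite mulrBr opprD addrA opprB addrC addrA subrK. 
have r0' : 0 <= r^-1 by rewrite invr_ge0 ltW.
apply/seteqP; split => t /=; rewrite /eball /= E enormZ (ger0_norm r0');
  by rewrite ler_pdivrMl // mulr1.
Qed.

Lemma lebV_ball d (x : 'rV[R]_d) (r : R) : 0 < r ->
  lebV (eball x r) = ((r ^+ d)%:E * lebV (eball x 1))%E.
Proof.
move=> r0; rewrite /lebV ballr_aff // lebRd_aff ?invr_gt0 //; last exact: measurable_ball1.
by rewrite invrK.
Qed.

End balls.

Section densb.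
Context {R : realType}.

Lemma dens_le d (p : 'rV[R]_d -> R) (x : 'rV[R]_d) (M : R) :
  is_prob_density p -> (forall y, p y <= M) ->
  (dens_measure p (eball x 1) <= M%:E * lebV (eball x 1))%E.
Proof.
move=> [mp [p0 _]] pM.
have [m mE] := lebRd_measure (R:=R) d.
rewrite /dens_measure /lebV mE.
have mD := measurable_ball1 d x.
rewrite -integral_cst //.
apply: ge0_le_integral => //.
- by move=> t _; rewrite lee_fin.
- by apply/measurable_EFinP; exact: measurable_funS mp.
- by move=> t _; rewrite /= lee_fin.
Qed.
End densb.

From mathcomp Require Import lra.

Lemma fine_mul_pos (R : realType) (x : R) (y : \bar R) : 0 < x ->
  fine (x%:E * y)%E = x * fine y.
Proof.
move=> x0; case: y => [v| |] /=.
- by [].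
- by rewrite real_mulry ?gtr0_real // gtr0_sg // mul1e /= mulr0.
- by rewrite real_mulrNy ?gtr0_real // gtr0_sg // mul1e /= mulr0.
Qed.

Theorem lemmaA1 (R : realType) :
  exists C : R, forall (d : nat) (p : nat -> 'rV[R]_d -> R)
    (thetahat : nat -> 'rV[R]_d) (delta c : R) (N0 : nat),
  0 < delta -> 0 < c ->
  (forall n, is_prob_density (p n)) ->
  (forall n, (N0 < n)%N ->
     (* (1) thetahat n is the unique maximizer of p n *)
     ((forall th, p n th <= p n (thetahat n)) /\
      (forall th, p n th = p n (thetahat n) -> th = thetahat n)) /\
     (* (2) *)
     (dens_measure (p n) (eball (thetahat n) 1) > (2^-1)%:E)%E /\
     (* (3) *)
     (forall th, eball (thetahat n) delta th ->
        0 < p n th /\ differentiable (p n) th /\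
        forall v : 'rV[R]_d, enorm v = 1 ->
          `|'D_v (p n) th| / p n th <= n%:R `^ c)) ->
  forall n : nat, (N0 < n)%N -> delta `^ (- c^-1) < n%:R ->
  forall th, eball (thetahat n) (n%:R `^ (- c)) th ->
    unif_density (thetahat n) (n%:R `^ (- c)) th / p n th
      <= C * n%:R `^ (c * d%:R).
Proof.
exists (2 * expR 1).
move=> d p th0 delta c N0 delta0 c0 hdens hyp n nN0 hn th thin.
have [[hmax _] [hhalf hball]] := hyp n nN0.
have n0 : 0 < n%:R :> R by rewrite ltr0n; apply: leq_ltn_trans nN0.
have K0 : 0 < n%:R `^ c by exact: powR_gt0.
have rE : n%:R `^ (- c) = (n%:R `^ c)^-1 by rewrite powRN.
have r0 : 0 < n%:R `^ (- c) by rewrite rE invr_gt0.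
have rK : n%:R `^ (- c) * n%:R `^ c <= 1 by rewrite rE mulVf ?gt_eqF.
have rdelta : n%:R `^ (- c) <= delta.
  have h := gt0_ltr_powR c0 (powR_ge0 delta (- c^-1)) (ltW n0) hn.
  move: h; rewrite -powRrM mulNr mulVf ?gt_eqF // (powR_inv1 (ltW delta0)) => h.
  rewrite rE -[delta]invrK; apply: ltW.
  by rewrite ltf_pV2 ?posrE ?invr_gt0.
have ball_delta : forall y, enorm (th0 n - y) <= n%:R `^ (- c) -> eball (th0 n) delta y.
  by move=> y hy; rewrite /eball /=; exact: le_trans hy rdelta.
have lower : p n (th0 n) <= p n th * expR 1.
  apply: (@density_lower R d (p n) (th0 n) th (n%:R `^ (- c)) (n%:R `^ c)) => //.
  by move=> y hy; apply: hball; exact: ball_delta.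
have Pth : 0 < p n th by have [] := hball th (ball_delta th thin).
have hint := dens_le d (p n) (th0 n) (p n (th0 n)) (hdens n) hmax.
rewrite /unif_density lebV_ball //.
rewrite indicE mem_set // mul1r fine_mul_pos ?exprn_gt0 //.
have NE : n%:R `^ (c * d%:R) = (n%:R `^ c) ^+ d by rewrite powRrM powR_mulrn ?powR_ge0.
rewrite NE.
move: (lt_le_trans hhalf hint).
case: (lebV (eball (th0 n) 1)) => [v| |] /=; last 2 first.
- move=> _; rewrite mulr0 invr0 mul0r; apply: mulr_ge0; first by rewrite mulr_ge0 ?expR_ge0.
  by rewrite exprn_ge0 // ltW.
- move=> _; rewrite mulr0 invr0 mul0r; apply: mulr_ge0; first by rewrite mulr_ge0 ?expR_ge0.
  by rewrite exprn_ge0 // ltW.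
rewrite -EFinM lte_fin => hv.
have Pth0 : 0 < p n (th0 n) by apply: lt_le_trans Pth (hmax th).
have v0 : 0 < v.
  rewrite ltNge; apply/negP => v0.
  have : p n (th0 n) * v <= 0 by rewrite pmulr_rle0.
  move=> h; have := lt_le_trans hv h; lra.
rewrite rE exprVn invfM invrK.
have Nd0 : 0 < (n%:R `^ c) ^+ d by rewrite exprn_gt0.
rewrite (mulrC (2 * expR 1)) -!mulrA ler_pM2l //.
rewrite ler_pdivrMr // -[v^-1]mul1r ler_pdivrMr //.
have h3 : p n (th0 n) * v <= p n th * expR 1 * v by rewrite ler_wpM2r // ltW.
have e0 : 0 < expR 1 :> R by exact: expR_gt0.
nra.
Qed.
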